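(* Let $d\ge 3$ and $u>0$. For any sets $A,B\subseteq\mathbb R^d$, the event $$\{A\stackrel{\mathcal V}{\longleftrightarrow}B\}=\{\omega\in\Omega:\text{there is a continuous path }p:[0,1]\to\mathcal V(\omega)\text{ with }p(0)\in A,\ p(1)\in B\}$$ belongs to the $\sigma$-algebra $\mathcal A$.
   Context: $\mathbb L$ is the set of lines in $\mathbb R^d$, with the topology making $\gamma:e_1^\perp\times SO_d\to\mathbb L$, $\gamma(x,\vartheta)=\vartheta(x+\mathbb R e_1)$, continuous (finest such topology) and its Borel $\sigma$-algebra. $\Omega$ is the set of locally finite point measures $\omega=\sum_i\delta_{l_i}$ on $\mathbb L$ (finite on compact sets), and $\mathcal A$ is the $\sigma$-algebra on $\Omega$ generated by the evaluation maps $\omega\mapsto\omega(A)$, $A$ Borel in $\mathbb L$. For $l\in\mathbb L$, $C(l)=l+\overline{B(0,1)}$. For $\omega\in\Omega$, $\mathcal L(\omega)=\bigcup_{l\in\operatorname{supp}\omega}C(l)$ and the vacant set is $\mathcal V(\omega)=\mathbb R^d\setminus\mathcal L(\omega)$. *)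

(* Defs.v *)
From HB Require Import structures.
From mathcomp Require Import all_boot all_order all_algebra.
From mathcomp Require Import all_classical all_reals all_analysis.
From mathcomp Require Import measurable_realfun.
Set Implicit Arguments. Unset Strict Implicit. Unset Printing Implicit Defensive.
Import Order.TTheory GRing.Theory Num.Theory.
Import numFieldNormedType.Exports.
Local Open Scope classical_set_scope.
Local Open Scope ring_scope.

Section Lines.
Context (R : realType) (d : nat).

Definition e1 : 'rV[R]_d := \row_(i < d) (if val i == 0%N then 1 else 0).

Definition enorm (v : 'rV[R]_d) : R := Num.sqrt (\sum_(i < d) v ord0 i ^+ 2).

Definition is_line (S : set 'rV[R]_d) : Prop :=
  exists (a v : 'rV[R]_d), v != 0 /\ S = [set a + t *: v | t in [set: R]].

Definition line := {S : set 'rV[R]_d | is_line S}.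
HB.instance Definition _ := gen_eqMixin line.
HB.instance Definition _ := gen_choiceMixin line.

Definition e1perp (x : 'rV[R]_d) : Prop := x *m e1^T = 0.
Definition SOd (th : 'M[R]_d) : Prop := th *m th^T = 1%:M /\ \det th = 1.
Definition gdom : set ('rV[R]_d * 'M[R]_d) := [set p | e1perp p.1 /\ SOd p.2].

(* gamma(x, theta) = theta (x + R e_1)  (theta acting on column vectors) *)
Definition gamma_set (p : 'rV[R]_d * 'M[R]_d) : set 'rV[R]_d :=
  [set (p.1 + t *: e1) *m p.2^T | t in [set: R]].

(* gamma^{-1}(U) as a subset of the subspace gdom (set_type carries the
   subspace topology). *)
Definition gamma_pre (U : set line) : set (set_type gdom) :=
  [set p | exists2 l, U l & sval l = gamma_set (set_val p)].

Definition line_open (U : set line) : Prop := open (gamma_pre U).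

Lemma e1_neq0 : (0 < d)%N -> e1 != 0.
Proof.
move=> dpos; apply/negP => /eqP /rowP /(_ (Ordinal dpos)).
by rewrite !mxE /= => /eqP; rewrite oner_eq0.
Qed.

Lemma gamma_line (p : 'rV[R]_d * 'M[R]_d) : (0 < d)%N -> SOd p.2 ->
  is_line (gamma_set p).
Proof.
case: p => x th /= dpos [hth _].
exists (x *m th^T), (e1 *m th^T); split.
  apply/negP => /eqP h.
  have : e1 *m th^T *m th = e1 by rewrite -mulmxA (mulmx1C hth) mulmx1.
  by rewrite h mul0mx => /esym /eqP; apply/negP; exact: e1_neq0.
apply/seteqP; split => y [t _ <-]; exists t => //=;
  by rewrite mulmxDl scalemxAl.
Qed.

Lemma line_openT : line_open setT.
Proof.
rewrite /line_open.
have [d0|dpos] := posnP d.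
  suff -> : gamma_pre setT = set0 by exact: open0.
  apply/seteqP; split => // p [[S [a [v [vn0 _]]]] _ _].
  move: vn0; rewrite (_ : v = 0) ?eqxx //; apply/matrixP => i j.
  by have := ltn_ord j; rewrite {2}d0.
suff -> : gamma_pre setT = setT by exact: openT.
apply/seteqP; split => // p _.
have /set_mem [_ hth] := valP p.
by exists (exist _ _ (gamma_line dpos hth)).
Qed.

Lemma line_sval_inj (l1 l2 : line) : sval l1 = sval l2 -> l1 = l2.
Proof.
case: l1 l2 => S1 h1 [S2 h2] /= e; subst S2.
by congr exist; exact: Prop_irrelevance.
Qed.

Lemma line_openI : setI_closed line_open.
Proof.
move=> A B oA oB; rewrite /line_open.
suff -> : gamma_pre (A `&` B) = gamma_pre A `&` gamma_pre B by exact: openI.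
apply/seteqP; split => p.
  by case=> l [Al Bl] e; split; exists l.
case=> -[l1 Al1 e1'] [l2 Bl2 e2']; exists l1 => //; split => //.
by rewrite (line_sval_inj (etrans e1' (esym e2'))).
Qed.

Lemma line_open_bigU (I : Type) (f : I -> set line) :
  (forall i, line_open (f i)) -> line_open (\bigcup_i f i).
Proof.
move=> of_; rewrite /line_open.
suff -> : gamma_pre (\bigcup_i f i) = \bigcup_i gamma_pre (f i).
  by apply: bigcup_open => i _; exact: of_.
apply/seteqP; split => p.
  by case=> l [i _ fil] e; exists i => //; exists l.
by case=> i _ [l fil e]; exists l => //; exists i.
Qed.

HB.instance Definition _ :=
  isOpenTopological.Build line line_openT line_openI line_open_bigU.

End Lines.

Section Vacant.
Context (R : realType) (d : nat).
Local Notation L := (line R d).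

Definition cyl (l : L) : set 'rV[R]_d :=
  [set y | exists2 x, sval l x & enorm (y - x) <= 1].

Definition borel_L : set (set L) := <<s [set: L], open >>.

(* omega = sum_{i in I} delta_{l_i}, I countable (possibly finite or empty);
   omega is represented by its values on all subsets of L *)
Definition point_measure (w : set L -> \bar R) : Prop :=
  exists (I : set nat) (l : nat -> L),
    forall A : set L, w A = (\esum_(i in I) (\1_A (l i) : R)%:E)%E.

Definition locally_finite (w : set L -> \bar R) : Prop :=
  forall K : set L, compact K -> (w K < +oo)%E.

Definition Omega : set (set L -> \bar R) :=
  [set w | point_measure w /\ locally_finite w].

Definition eval_preimages : set (set (set L -> \bar R)) :=
  [set E | exists (A : set L) (B : set (\bar R)),
     [/\ borel_L A, measurable B & E = Omega `&` ((fun w => w A) @^-1` B)]].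

Definition calA : set (set (set L -> \bar R)) := <<s Omega, eval_preimages >>.

Definition supp (w : set L -> \bar R) : set L := [set l | (0 < w [set l])%E].

Definition occupied (w : set L -> \bar R) : set 'rV[R]_d :=
  \bigcup_(l in supp w) cyl l.

Definition vacant (w : set L -> \bar R) : set 'rV[R]_d := ~` occupied w.

Definition vconnect (A B : set 'rV[R]_d) : set (set L -> \bar R) :=
  [set w | Omega w /\
     exists p : R -> 'rV[R]_d,
       [/\ {within `[0, 1], continuous p},
           (forall t, t \in `[0, 1] -> vacant w (p t)),
           A (p 0) & B (p 1)]].

End Vacant.

(* Main.v *)
Require Import Defs.
From HB Require Import structures.
From mathcomp Require Import all_boot all_order all_algebra.
From mathcomp Require Import all_classical all_reals all_analysis.
From mathcomp Require Import measurable_realfun.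
From mathcomp Require Import ring lra.
Import Order.TTheory GRing.Theory Num.Theory.
Import numFieldNormedType.Exports.
Local Open Scope classical_set_scope.
Local Open Scope ring_scope.
Module LF.
Import finmap.
Lemma lf_finite_gen (R : realType) (X : Type) (I : set nat) (f : nat -> X) (K : set X) :
  (\esum_(i in I) (\1_K (f i) : R)%:E < +oo)%E -> finite_set [set i | I i /\ K (f i)].
Proof.
move=> wK; apply: contrapT => inf.
have hn : forall n : nat, ((n%:R)%:E <= \esum_(i in I) (\1_K (f i) : R)%:E)%E.
  move=> n; have [B BJ nB] := infinite_set_fset n inf.
  apply: esum_ge; exists [set` B].
    by split; [exact: finite_fset| move=> i /BJ []].
  rewrite fsbig_finite ?finite_fset // set_fsetK.
  rewrite (@eq_big_seq _ _ _ _ _ _ (fun _ => 1%:E)); last first.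
    by move=> i iB; have [_ Ki] := BJ i iB; rewrite indicE mem_set.
  rewrite sumEFin lee_fin.
  have -> : \sum_(i <- B) (1 : R) = (\sum_(i <- B) 1%N)%:R by rewrite natr_sum.
  by rewrite -card_fset_sum1 ler_nat.
have w0 : (0 <= \esum_(i in I) (\1_K (f i) : R)%:E)%E by apply: esum_ge0 => i _; rewrite lee_fin.
move: wK w0 hn; case: (\esum_(i in I) _) => [r| |] //.
move=> _ r0 /(_ (Num.Def.archi_bound r)); rewrite lee_fin leNgt.
by rewrite archi_boundP // -lee_fin.
Qed.
Lemma filter_bigI_fin (T : Type) (F : set_system T) (S : set nat) (g : nat -> set T) :
  Filter F -> finite_set S -> (forall i, S i -> F (g i)) -> F (\bigcap_(i in S) g i).
Proof.
move=> FF fS h; rewrite -(fset_setK fS); apply: filter_bigI => i.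
by rewrite in_fset_set // => /set_mem; exact: h.
Qed.
End LF.

Section Main.
Context (R : realType) (d : nat).
Local Notation L := (line R d).
Local Notation V := ('rV[R]_d).

Definition idx := ('rV[rat]_d * nat)%type.
Definition ctr (s : idx) : V := \row_j ratr (s.1 ord0 j).
Definition fb (s : idx) : set V := ball (ctr s) (s.2.+1%:R^-1 : R).

Definition HS (S : set V) : set L :=
  [set l | exists2 x, sval l x & exists2 y, S y & enorm (y - x) <= 1].

Definition Uc (c : seq idx) : set L := \bigcup_(t in [set t | t \in c]) HS (fb t).

Fixpoint linked (s : idx) (r : seq idx) : Prop :=
  match r with [::] => True | t :: r' => (fb s `&` fb t !=set0) /\ linked t r' end.

Definition okchain (A B : set V) (s : idx) (r : seq idx) :=
  [/\ A `&` fb s !=set0, linked s r & B `&` fb (last s r) !=set0].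

Definition gpath (W : set V) (x z : V) := exists p : R -> V,
  [/\ continuous p, (forall t, 0 <= t <= 1 -> W (p t)), p 0 = x & p 1 = z].

Lemma esum_ind_eq0 (I : set nat) (f : nat -> L) (A : set L) :
  (\esum_(i in I) (\1_A (f i) : R)%:E = 0)%E <-> (forall i, I i -> ~ A (f i)).
Proof.
split; last first.
  by move=> h; apply: esum1 => i /h Ai; rewrite indicE memNset.
move=> h i Ii Ai.
have : (1%:E <= \esum_(i in I) (\1_A (f i) : R)%:E)%E.
  apply: esum_ge; exists [set i].
    by split; [exact: finite_set1| move=> j ->].
  by rewrite fsbig_set1 indicE mem_set.
by rewrite h lee_fin ler10.
Qed.

Lemma supp_char (w : set L -> \bar R) (I : set nat) (f : nat -> L) :
  (forall A : set L, w A = (\esum_(i in I) (\1_A (f i) : R)%:E)%E) ->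
  forall l, supp w l <-> exists2 i, I i & f i = l.
Proof.
move=> hw l; rewrite /supp /=; split.
  move=> h; apply: contrapT => nh.
  move: h; rewrite hw (_ : esum _ _ = 0%E) ?ltxx//.
  by apply/esum_ind_eq0 => i Ii fil; apply: nh; exists i.
case=> i Ii fil; rewrite lt0e; apply/andP; split; last first.
  by rewrite hw; apply: esum_ge0 => j _; rewrite lee_fin.
apply/negP => /eqP; rewrite hw => /esum_ind_eq0 /(_ i Ii); apply.
by rewrite fil.
Qed.

Lemma w0_char (w : set L -> \bar R) : Omega w ->
  forall H, w H = 0%E <-> (forall l, supp w l -> ~ H l).
Proof.
case=> -[I [f hw]] _ H; have hs := @supp_char w I f hw.
rewrite hw esum_ind_eq0; split.
  by move=> h l /hs [i Ii <-]; exact: h.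
by move=> h i Ii; apply: h; apply/hs; exists i.
Qed.

Lemma Uc0_inV (w : set L -> \bar R) c : Omega w ->
  w (Uc c) = 0%E <-> (forall t, t \in c -> fb t `<=` vacant w).
Proof.
move=> Ow; rewrite w0_char //; split.
  move=> h t tc y fty [l sl cly].
  apply: (h l sl); exists t => //.
  case: cly => x lx hx; exists x => //; exists y => //.
move=> h l sl [t tc [x lx [y fty hy]]].
by apply: (h t tc y fty); exists l => //; exists x.
Qed.

Lemma fb_convex t (x z : V) (u : R) : fb t x -> fb t z -> 0 <= u <= 1 ->
  fb t (x + u *: (z - x)).
Proof.
rewrite /fb -!ball_normE /= => hx hz /andP [u0 u1].
set c := ctr t; set r := (t.2.+1%:R^-1 : R).
have -> : c - (x + u *: (z - x)) = (1 - u) *: (c - x) + u *: (c - z).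
  by apply/rowP => j; rewrite !mxE; ring.
apply: (le_lt_trans (ler_normD _ _)); rewrite !normrZ.
rewrite (ger0_norm u0) ger0_norm ?subr_ge0 //.
have hcx : 0 <= `|c - x| by [].
have hcz : 0 <= `|c - z| by [].
have hm : Num.max `|c - x| `|c - z| < r by rewrite gt_max hx hz.
have ha : `|c - x| <= Num.max `|c - x| `|c - z| by rewrite le_max lexx.
have hb : `|c - z| <= Num.max `|c - x| `|c - z| by rewrite le_max lexx orbT.
move: hm ha hb; set m := Num.max _ _ => hm ha hb.
nra.
Qed.

Lemma seg_gpath (W : set V) t x z : fb t `<=` W -> fb t x -> fb t z ->
  gpath W x z.
Proof.
move=> tW fx fz; exists (fun u => x + u *: (z - x)); split.
- move=> u.
  have h : {for u, continuous (fun u : R => u *: (z - x))}.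
    by apply: continuousZr_tmp; exact: cvg_id.
  have h0 : {for u, continuous (fun _ : R => x)} by exact: cst_continuous.
  by have := continuousD h0 h; exact.
- by move=> u hu; apply: tW; apply: fb_convex.
- by rewrite scale0r addr0.
- by rewrite scale1r addrC subrK.
Qed.

Lemma gpath_trans (W : set V) x y z : gpath W x y -> gpath W y z -> gpath W x z.
Proof.
move=> [p1 [c1 W1 p10 p11]] [p2 [c2 W2 p20 p21]].
exists (fun t => p1 (Order.min (2 * t) 1) + p2 (Order.max (2 * t - 1) 0) - y); split.
- move=> t.
  have hm : {for t, continuous (fun t : R => Order.min (2 * t) 1)}.
    apply: (@continuous_min _ _ (fun t : R => 2 * t) (fun=> 1)).
      by apply: continuousM; [exact: cst_continuous| exact: cvg_id].
    exact: cst_continuous.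
  have hM : {for t, continuous (fun t : R => Order.max (2 * t - 1) 0)}.
    apply: (@continuous_max _ _ (fun t : R => 2 * t - 1) (fun=> 0)).
      have h2 : {for t, continuous (fun t : R => 2 * t)}.
        by apply: continuousM; [exact: cst_continuous| exact: cvg_id].
      have h0 : {for t, continuous (fun _ : R => 1 : R)} by exact: cst_continuous.
      by have := continuousB h2 h0; exact.
    exact: cst_continuous.
  have ha := continuous_comp hm (c1 _).
  have hb := continuous_comp hM (c2 _).
  have h0 : {for t, continuous (fun _ : R => y)} by exact: cst_continuous.
  by have := continuousB (continuousD ha hb) h0; exact.
- move=> t /andP [t0 t1].
  have [th|th] := leP t (2^-1).
    have h1 : Order.min (2 * t) 1 = 2 * t by apply/min_idPl; lra.
    have h2 : Order.max (2 * t - 1) 0 = 0 by apply/max_idPr; lra.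
    rewrite h1 h2 p20 addrK; apply: W1; apply/andP; split; lra.
  have h1 : Order.min (2 * t) 1 = 1 by apply/min_idPr; lra.
  have h2 : Order.max (2 * t - 1) 0 = 2 * t - 1 by apply/max_idPl; lra.
  rewrite h1 h2 p11 addrC addKr; apply: W2; apply/andP; split; lra.
- have h1 : Order.min (2 * 0) 1 = 0 :> R by rewrite mulr0; apply/min_idPl; lra.
  have h2 : Order.max (2 * 0 - 1) 0 = 0 :> R by apply/max_idPr; lra.
  by rewrite h1 h2 p10 p20 addrK.
- have h1 : Order.min (2 * 1) 1 = 1 :> R by apply/min_idPr; lra.
  have h2 : Order.max (2 * 1 - 1) 0 = 1 :> R.
    by rewrite (_ : 2 * 1 - 1 = 1 :> R); [apply/max_idPl; lra| lra].
  by rewrite h1 h2 p11 p21 addrC addKr.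
Qed.

Lemma linked_gpath (W : set V) r : forall s, linked s r ->
  (forall t, t \in s :: r -> fb t `<=` W) ->
  forall x z, fb s x -> fb (last s r) z -> gpath W x z.
Proof.
elim: r => [|t r IH] s /=.
  by move=> _ hW x z fx fz; apply: (@seg_gpath W s) => //; apply: hW; rewrite inE eqxx.
move=> [[m [fsm ftm]] lk] hW x z fx fz.
apply: (@gpath_trans _ _ m).
  by apply: (@seg_gpath W s) => //; apply: hW; rewrite inE eqxx.
have hW' : forall t', t' \in t :: r -> fb t' `<=` W.
  by move=> t' ht'; apply: hW; rewrite inE ht' orbT.
exact: (IH t lk hW' m z ftm fz).
Qed.
Lemma ballE (x y : V) e : 0 < e -> ball x e y <-> forall i j, `|x i j - y i j| < e.
Proof. move=> e0; split; first by case=> _ h i j; have := h i j; rewrite -ball_normE.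
by move=> h; split => // i j; rewrite -ball_normE; exact: h. Qed.

Lemma fb_base {W : set V} {y} : open W -> W y -> exists s, fb s y /\ fb s `<=` W.
Proof.
move=> oW Wy.
have /nbhs_ballP [e e0 eW] : nbhs y W by apply: open_nbhs_nbhs; split.
have [k hk] := @ltr_add_invr R 0 (e / 2) ltac:(by rewrite divr_gt0).
rewrite add0r in hk; set r : R := k.+1%:R^-1 in hk.
have r0 : 0 < r by rewrite /r invr_gt0.
have hq : forall j : 'I_d, exists q : rat, `|y ord0 j - ratr q| < r.
  move=> j; have := @dense_rat R (ball (y ord0 j) r).
  case.
  - by exists (y ord0 j); exact: ballxx.
  - exact: ball_open.
  by move=> z [bz [q _ qz]]; exists q; rewrite qz; move: bz; rewrite -ball_normE.
case: (choice hq) => f hf.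
exists (\row_j f j, k); split.
  apply/ballE => // i j; rewrite /ctr /= !mxE (ord1 i) distrC; exact: hf.
move=> z hz; apply: eW.
have hyc : ball y r (ctr (\row_j f j, k)).
  apply/ballE => // i j; rewrite /ctr /= !mxE (ord1 i); exact: hf.
have := ball_triangle hyc hz; apply: le_ball.
by rewrite /r -/r; move: hk; set a := r; lra.
Qed.

Lemma linked_rcons r : forall s t, linked s r -> fb (last s r) `&` fb t !=set0 ->
  linked s (rcons r t).
Proof.
elim: r => [|u r IH] s t /=; first by move=> _ h; split.
by move=> [h1 h2] h3; split => //; apply: IH.
Qed.

Lemma in01 (u : R) : 0 <= u <= 1 -> `[0, 1]%classic u.
Proof. by move=> hu; rewrite /= in_itv /=. Qed.

Lemma path_chain' (W : set V) (A B : set V) (p : R -> V) : open W ->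
  {within `[0, 1], continuous p} -> (forall t, t \in `[0, 1] -> W (p t)) ->
  A (p 0) -> B (p 1) ->
  exists s r, okchain A B s r /\ (forall t, t \in s :: r -> fb t `<=` W).
Proof.
move=> oW cp pW Ap Bp.
pose Reach := [set y | exists s r, [/\ A `&` fb s !=set0, linked s r,
  (forall t, t \in s :: r -> fb t `<=` W) & fb (last s r) y]].
pose C := p @` `[0, 1].
have cC : connected C := connected_continuous_connected (@segment_connected R 0 1) cp.
have CW : C `<=` W by move=> y [u hu <-]; apply: pW.
have key : C `&` Reach = C.
  apply: cC.
  - have C0 : C (p 0) by exists 0 => //; apply: in01; rewrite lexx ler01.
    have [s [fs sW]] := fb_base oW (CW _ C0).
    exists (p 0); split => //.
    exists s, [::]; split => //.
      by exists (p 0).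
    by move=> t; rewrite inE => /eqP ->.
  - exists Reach => //; rewrite openE => y [s [r [h1 h2 h3 h4]]].
    apply: (@filterS _ _ _ (fb (last s r))).
      by move=> z hz; exists s, r; split.
    by apply: open_nbhs_nbhs; split => //; exact: ball_open.
  - exists (~` \bigcup_(t in [set t | fb t `<=` W /\ fb t `&` Reach = set0]) fb t).
      by rewrite closedC; apply: bigcup_open => t _; exact: ball_open.
    apply/seteqP; split => y.
      move=> [Cy Ry]; split => // -[t [_ h] fty].
      by have : (fb t `&` Reach) y by []; rewrite h.
    move=> [Cy Ky]; split => //.
    have [t [fty tW]] := fb_base oW (CW _ Cy).
    have : fb t `&` Reach !=set0.
      apply/set0P/negP => /eqP h0; apply: Ky; exists t => //.
    move=> [z [ftz [s [r [h1 h2 h3 h4]]]]].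
    exists s, (rcons r t); split => //.
    + apply: linked_rcons => //; exists z; split => //.
    + move=> t'; rewrite -rcons_cons mem_rcons inE => /orP [/eqP ->|] //.
      exact: h3.
    + by rewrite last_rcons.
have : (C `&` Reach) (p 1) by rewrite key; exists 1 => //; apply: in01; rewrite lexx ler01.
move=> [_ [s [r [h1 h2 h3 h4]]]]; exists s, r; split => //; split => //.
by exists (p 1).
Qed.
Local Notation M := ('M[R]_d).

Lemma cont_fst : continuous (fun p : V * M => p.1).
Proof. by move=> p; exact: cvg_fst. Qed.
Lemma cont_snd : continuous (fun p : V * M => p.2).
Proof. by move=> p; exact: cvg_snd. Qed.

Lemma mx_cont {T : topologicalType} m n (f : T -> 'M[R]_(m, n)) :
  (forall i j, continuous (fun x => f x i j)) -> continuous f.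
Proof.
move=> h x; apply/cvg_ballP => e e0.
have : \forall z \near x, forall i j, ball (f x i j) e (f z i j).
  apply: filter_forall => i; apply: filter_forall => j.
  exact: (cvg_ball (h i j x)).
by apply: filterS => z hz; split.
Qed.

Lemma cont_sum {T : topologicalType} (I : Type) (s : seq I) (F : I -> T -> R) :
  (forall k, continuous (F k)) -> continuous (fun x => \sum_(k <- s) F k x).
Proof.
move=> h; elim: s => [|k s IH] x.
  under eq_fun do rewrite big_nil; exact: cst_continuous.
under eq_fun do rewrite big_cons.
exact: (continuousD (h k x) (IH x)).
Qed.

Lemma cont_prod {T : topologicalType} (I : Type) (s : seq I) (F : I -> T -> R) :
  (forall k, continuous (F k)) -> continuous (fun x => \prod_(k <- s) F k x).
Proof.
move=> h; elim: s => [|k s IH] x.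
  under eq_fun do rewrite big_nil; exact: cst_continuous.
under eq_fun do rewrite big_cons.
exact: (continuousM (h k x) (IH x)).
Qed.

Lemma cont_entry1 i j : continuous (fun p : V * M => p.1 i j).
Proof. by move=> p; exact: (continuous_comp (cont_fst p) (@coord_continuous R 1 d i j p.1)). Qed.
Lemma cont_entry2 i j : continuous (fun p : V * M => p.2 i j).
Proof. by move=> p; exact: (continuous_comp (cont_snd p) (@coord_continuous R d d i j p.2)). Qed.

Definition phi (t : R) (p : V * M) : V := (p.1 + t *: e1 R d) *m p.2^T.

Lemma phi_cont t : continuous (phi t).
Proof.
apply: mx_cont => i j.
have -> : (fun x => phi t x i j) =
   (fun x => \sum_(k <- index_enum 'I_d) ((x.1 i k + t * e1 R d i k) * x.2 j k)).
  apply: funext => x; rewrite /phi !mxE; apply: eq_bigr => k _.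
  by rewrite !mxE.
apply: cont_sum => k x.
have h1 := cont_entry1 i k x; have h3 := cont_entry2 j k x.
have h2 : {for x, continuous (fun _ : V * M => t * e1 R d i k)} by exact: cst_continuous.
by have := continuousM (continuousD h1 h2) h3; exact.
Qed.
Lemma HS_open' (dpos : (0 < d)%N) (S : set V) : open S -> open (HS S).
Proof.
move=> oS; change (open (gamma_pre (HS S))).
pose Wt := \bigcup_(t in [set: R]) \bigcup_(z in [set z | enorm z <= 1])
   (phi t @^-1` [set v | S (v + z)]).
have oWt : open Wt.
  apply: bigcup_open => t _; apply: bigcup_open => z _.
  apply: open_comp; first by move=> p _; exact: phi_cont.
  apply: (@open_comp _ _ (fun v : V => v + z) S) => // v _.
  have h0 : {for v, continuous (fun _ : V => z)} by exact: cst_continuous.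
  by have := continuousD (@cvg_id _ (nbhs v)) h0; exact.
have -> : gamma_pre (HS S) = set_val @^-1` Wt.
  apply/seteqP; split => p.
    case=> l [x lx [y Sy hxy]] e; rewrite e in lx; case: lx => t _ xt.
    exists t => //; exists (y - x) => //.
    by rewrite /= /phi xt addrC subrK.
  case=> t _ [z hz Sz]; have /set_mem [_ hth] := valP p.
  exists (exist _ _ (gamma_line dpos hth)) => //=.
  exists (phi t (set_val p)); first by exists t.
  by exists (phi t (set_val p) + z) => //; rewrite addrC addKr.
apply: open_comp => // p _.
exact: initial_continuous.
Qed.
Definition dot (u w : V) : R := \sum_k u ord0 k * w ord0 k.

Lemma dot_ge0 u : 0 <= dot u u.
Proof. by apply: sumr_ge0 => k _; rewrite -expr2 sqr_ge0. Qed.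

Lemma dot_gt0 {u : V} : u != 0 -> 0 < dot u u.
Proof.
move=> un0; rewrite lt_neqAle dot_ge0 andbT; apply/negP => /eqP h.
move/negP: un0; apply; apply/eqP/rowP => k.
have := @psumr_eq0P R _ xpredT (fun k => u ord0 k * u ord0 k).
move=> /(_ (fun k _ => ltac:(by rewrite -expr2 sqr_ge0)) (esym h) k erefl).
by move=> /eqP; rewrite mulf_eq0 orbb => /eqP ->; rewrite mxE.
Qed.

Lemma enorm_le1 u : enorm u <= 1 <-> dot u u <= 1.
Proof.
rewrite /enorm (_ : \sum_i u ord0 i ^+ 2 = dot u u); last first.
  by apply: eq_bigr => k _; rewrite expr2.
have h0 := dot_ge0 u; have hs := sqr_sqrtr h0; have s0 := sqrtr_ge0 (dot u u).
move: hs s0; set s := Num.sqrt _ => hs s0; rewrite -hs; split => h; nra.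
Qed.

Lemma dot_sub_scale u v s : dot (u - s *: v) (u - s *: v) =
  dot u u - 2 * s * dot u v + s ^+ 2 * dot v v.
Proof.
rewrite /dot !mulr_sumr -sumrB -big_split.
by apply: eq_bigr => k _; rewrite !mxE /=; ring.
Qed.

Definition tstar (u v : V) := dot u v / dot v v.
Definition mfun (a v z : V) := let u := z - a in
  dot (u - tstar u v *: v) (u - tstar u v *: v).

Lemma mfun_min (u v : V) t : v != 0 ->
  dot (u - t *: v) (u - t *: v) =
  dot (u - tstar u v *: v) (u - tstar u v *: v) + (t - tstar u v) ^+ 2 * dot v v.
Proof.
move=> vn0; have hv := dot_gt0 vn0.
rewrite !dot_sub_scale.
have e : dot u v = tstar u v * dot v v by rewrite /tstar divfK // gt_eqF.
rewrite e; move: (tstar u v) (dot v v) (dot u u) => a b c; ring.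
Qed.

Lemma cyl_char {l : L} {a v : V} : v != 0 -> sval l = [set a + t *: v | t in [set: R]] ->
  forall z, cyl l z <-> mfun a v z <= 1.
Proof.
move=> vn0 hl z; have hv := dot_gt0 vn0; rewrite /cyl /mfun /=; split.
  case=> x; rewrite hl => -[t _ <-] /enorm_le1.
  rewrite (_ : z - (a + t *: v) = (z - a) - t *: v); last by rewrite opprD addrA.
  rewrite mfun_min //; set m := dot _ _ => h.
  have : 0 <= (t - tstar (z - a) v) ^+ 2 * dot v v by rewrite mulr_ge0 ?sqr_ge0 // ltW.
  move: h; set k := _ * _; lra.
move=> h; exists (a + tstar (z - a) v *: v); first by rewrite hl; exists (tstar (z - a) v).
apply/enorm_le1.
by rewrite (_ : z - (a + _ *: v) = (z - a) - tstar (z - a) v *: v) // opprD addrA.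
Qed.

Lemma cont_row_entry {T : topologicalType} {f : T -> V} k :
  continuous f -> continuous (fun x => f x ord0 k).
Proof. by move=> cf x; exact: (continuous_comp (cf x) (@coord_continuous R 1 d ord0 k (f x))). Qed.

Lemma cont_dot {T : topologicalType} {f g : T -> V} :
  continuous f -> continuous g -> continuous (fun x => dot (f x) (g x)).
Proof.
move=> cf cg; apply: cont_sum => k x.
by have := continuousM (cont_row_entry k cf x) (cont_row_entry k cg x); exact.
Qed.

Lemma mfun_cont a v : continuous (mfun a v).
Proof.
have cu : continuous (fun z : V => z - a).
  move=> z; have h0 : {for z, continuous (fun _ : V => a)} by exact: cst_continuous.
  have hid : {for z, continuous (fun z : V => z)} by exact: cvg_id.
  by have := continuousB hid h0; exact.
have cw : continuous (fun z : V => (z - a) - tstar (z - a) v *: v).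
  move=> z; have ht : {for z, continuous (fun z : V => tstar (z - a) v)}.
    have h1 := cont_dot cu (@cst_continuous _ _ v) z.
    have h2 : {for z, continuous (fun _ : V => (dot v v)^-1)} by exact: cst_continuous.
    by have := continuousM h1 h2; exact.
  have := continuousB (cu z) (continuousZr_tmp (a:=v) ht); exact.
exact: (cont_dot cw cw).
Qed.

Lemma cyl_open_compl (l : L) : open (~` cyl l).
Proof.
have [a [v [vn0 hl]]] := svalP l.
have -> : ~` cyl l = mfun a v @^-1` [set x | x > 1].
  apply/seteqP; split => z /=.
    by move=> h; rewrite ltNge; apply/negP => /(cyl_char vn0 hl) .
  by move=> h /(cyl_char vn0 hl); rewrite leNgt h.
apply: open_comp; last exact: open_gt.
by move=> z _; exact: mfun_cont.
Qed.
Lemma box_compact n (Y : R) : compact [set x : 'rV[R]_n | forall j, `|x ord0 j| <= Y].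
Proof.
have -> : [set x : 'rV[R]_n | forall j, `|x ord0 j| <= Y] =
    [set v | forall i, (fun=> `[- Y, Y]%classic) i (v ord0 i)].
  apply/seteqP; split => x h j; have := h j; by rewrite /= in_itv /= ler_norml.
exact: (@rV_compact _ n (fun=> `[- Y, Y]%classic) (fun _ => @segment_compact R _ _)).
Qed.

Lemma vec_mx_cont : continuous (@vec_mx R d d).
Proof.
apply: mx_cont => i j; rewrite (_ : (fun x => _) = fun x : 'rV[R]_(d * d) => x ord0 (mxvec_index i j)).
  exact: coord_continuous.
by apply: funext => x; rewrite mxE.
Qed.

Definition box2 : set M := [set th | forall i j, `|th i j| <= 1].

Lemma box2_compact : compact box2.
Proof.
have -> : box2 = vec_mx @` [set x : 'rV[R]_(d * d) | forall j, `|x ord0 j| <= 1].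
  apply/seteqP; split => th.
    move=> h; exists (mxvec th); last by rewrite mxvecK.
    by move=> k; case/mxvec_indexP: k => i j; rewrite mxvecE.
  by case=> x hx <- i j; rewrite mxE.
apply: continuous_compact; last exact: box_compact.
by apply: continuous_subspaceT; exact: vec_mx_cont.
Qed.

Lemma closed_pre_eq (f : V * M -> R) (c : R) : continuous f -> closed [set p | f p = c].
Proof.
move=> cf; have hc : closed [set x : R | x = c] by exact: closed_eq.
by have := @preimage_closed _ _ f [set x | x = c] (fun x _ => cf x) hc.
Qed.

Lemma det_cont : continuous (fun p : V * M => \det p.2).
Proof.
rewrite /determinant; apply: cont_sum => s p.
have h1 : {for p, continuous (fun _ : V * M => (-1) ^+ perm.odd_perm s : R)} by exact: cst_continuous.
have h2 := @cont_prod _ _ (index_enum 'I_d) (fun i (p : V * M) => p.2 i (perm.fun_of_perm s i)) (fun i => cont_entry2 i _) p.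
by have := continuousM h1 h2; exact.
Qed.

Lemma gdom_closed : closed ((@gdom R d)).
Proof.
have -> : (@gdom R d) = [set p | (p.1 *m (e1 R d)^T) ord0 ord0 = 0] `&`
   (\bigcap_(ij in [set: 'I_d * 'I_d]) [set p : V * M | (p.2 *m p.2^T) ij.1 ij.2 = (1%:M : M) ij.1 ij.2])
   `&` [set p | \det p.2 = 1].
  apply/seteqP; split => -[x th] /=.
    move=> [h1 [h2 h3]]; split; [split|] => //.
      by rewrite /e1perp in h1; rewrite h1 mxE.
    by move=> ij _; rewrite /= h2.
  move=> [[h1 h2] h3]; split; last split => //.
    by apply/matrixP => i j; rewrite (ord1 i) (ord1 j) h1 mxE.
  by apply/matrixP => i j; exact: (h2 (i, j)).
apply: closedI; first apply: closedI.
- apply: closed_pre_eq.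
  have -> : (fun p : V * M => (p.1 *m (e1 R d)^T) ord0 ord0) =
      fun p => \sum_(k <- index_enum 'I_d) (p.1 ord0 k * (e1 R d)^T k ord0).
    by apply: funext => p; rewrite mxE.
  apply: cont_sum => k p.
  have h1 := cont_entry1 ord0 k p.
  have h2 : {for p, continuous (fun _ : V * M => (e1 R d)^T k ord0)} by exact: cst_continuous.
  by have := continuousM h1 h2; exact.
- apply: closed_bigI => -[i j] _; apply: closed_pre_eq.
  have -> : (fun p : V * M => (p.2 *m p.2^T) i j) =
      fun p => \sum_(k <- index_enum 'I_d) (p.2 i k * p.2 j k).
    by apply: funext => p; rewrite mxE; apply: eq_bigr => k _; rewrite mxE.
  apply: cont_sum => k p.
  by have := continuousM (cont_entry2 i k p) (cont_entry2 j k p); exact.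
- exact: closed_pre_eq det_cont.
Qed.

Definition Cy (Y : R) : set (V * M) :=
  ([set x : V | forall j, `|x ord0 j| <= Y] `*` box2) `&` (@gdom R d).

Lemma Cy_compact Y : compact (Cy Y).
Proof.
apply: compact_closedI; last exact: gdom_closed.
by apply: compact_setX; [exact: box_compact| exact: box2_compact].
Qed.

Lemma SOd1 : SOd (1%:M : M).
Proof. by split; [rewrite trmx1 mulmx1 | rewrite det1]. Qed.

Definition lineOf (dpos : (0 < d)%N) {p : V * M} (h : SOd p.2) : L :=
  exist _ (gamma_set p) (gamma_line dpos h).

Definition Gm (dpos : (0 < d)%N) (p : V * M) : L :=
  match pselect (SOd p.2) with
  | left h => lineOf dpos h
  | right _ => @lineOf dpos (0, 1%:M) SOd1 end.

Lemma Gm_sval dpos p : SOd p.2 -> sval (Gm dpos p) = gamma_set p.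
Proof. by move=> h; rewrite /Gm; case: pselect. Qed.

Lemma Gm_cont dpos : {within (@gdom R d), continuous (Gm dpos)}.
Proof.
apply/subspace_sigL_continuousP; apply/continuousP => U oU.
have -> : sigL ((@gdom R d)) (Gm dpos) @^-1` U = gamma_pre U.
  apply/seteqP; split => p /=; have /set_mem [_ hth] := valP p.
    by move=> h; exists (Gm dpos (set_val p)) => //; rewrite Gm_sval.
  case=> l Ul e.
  have hl : Gm dpos (set_val p) = l by apply: line_sval_inj; rewrite /= Gm_sval // e.
  by rewrite /sigL /= hl.
exact: oU.
Qed.
Lemma dotC u w : dot u w = dot w u.
Proof. by apply: eq_bigr => k _; rewrite mulrC. Qed.

Lemma dot_e1 (dpos : (0 < d)%N) u : dot (e1 R d) u = u ord0 (Ordinal dpos).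
Proof.
rewrite /dot (bigD1 (Ordinal dpos)) //= mxE eqxx mul1r big1 ?addr0 // => k hk.
rewrite mxE (_ : (val k == 0%N) = false) ?mul0r //; apply/negbTE.
by move: hk; apply: contra => /eqP h; apply/eqP/val_inj.
Qed.

Lemma row_mul_tr (u w : V) : u *m w^T = (dot u w)%:M.
Proof.
apply/matrixP => i j; rewrite (ord1 i) (ord1 j) !mxE /= mulr1n.
by apply: eq_bigr => k _; rewrite mxE.
Qed.

Lemma householder (d2 : (1 < d)%N) (v : V) : dot v v = 1 ->
  exists th : M, SOd th /\ e1 R d *m th^T = v.
Proof.
move=> hv; have dpos : (0 < d)%N by apply: ltn_trans d2.
set i0 := Ordinal dpos; set i1 := Ordinal d2.
set w := e1 R d - v; set s := dot w w.
have e10 : e1 R d ord0 i0 = 1 by rewrite mxE.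
have e11 : e1 R d ord0 i1 = 0 by rewrite mxE.
have hs : s = 2 - 2 * v ord0 i0.
  rewrite /s /w (_ : e1 R d - v = e1 R d - 1 *: v); last by rewrite scale1r.
  rewrite dot_sub_scale !dot_e1 -/i0 e10 hv; ring.
set P := w^T *m w; set c := 2 / s; set H := 1%:M - c *: P.
have PP : P *m P = s *: P.
  by rewrite /P mulmxA -(mulmxA w^T w w^T) row_mul_tr mul_mx_scalar -scalemxAl.
have Hsym : H^T = H by rewrite raddfB /= linearZ /= trmx_mul trmxK trmx1.
have HH : H *m H = 1%:M.
  have [s0|sn0] := eqVneq s 0.
    by rewrite /H /c s0 invr0 mulr0 scale0r subr0 mulmx1.
  rewrite /H mulmxBl mul1mx mulmxBr mulmx1 -scalemxAl -scalemxAr PP !scalerA.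
  have -> : c * c * s = c + c by rewrite /c; field.
  by apply/matrixP => i j; rewrite !mxE; ring.
have e1H : e1 R d *m H = v.
  have [s0|sn0] := eqVneq s 0.
    have w0 : w = 0.
      by case: (eqVneq w 0) => // wn0; have := dot_gt0 wn0; rewrite -/s s0 ltxx.
    rewrite /H /c s0 invr0 mulr0 scale0r subr0 mulmx1.
    by apply/eqP; rewrite -subr_eq0 -/w w0.
  rewrite /H mulmxBr mulmx1 -scalemxAr /P mulmxA row_mul_tr mul_scalar_mx scalerA.
  have hw0 : dot (e1 R d) w = 1 - v ord0 i0 by rewrite dot_e1 -/i0 /w !mxE.
  rewrite hw0 (_ : c * (1 - v ord0 i0) = 1) ?scale1r.
    by rewrite /w opprB addrC subrK.
  by rewrite /c hs; move: sn0; rewrite hs => sn0; field; move: sn0; apply: contra => /eqP h; apply/eqP; rewrite -h; ring.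
set del := \det H.
have del2 : del * del = 1 by rewrite /del -det_mulmx HH det1.
set r : 'rV[R]_d := \row_k (if k == i1 then del else 1).
set D := diag_mx r.
have DD : D *m D = 1%:M.
  rewrite /D mulmx_diag -diag_const_mx; congr diag_mx; apply/rowP => k.
  by rewrite !mxE; case: (k == i1) => //; rewrite mulr1.
exists (H *m D); split; first split.
- by rewrite trmx_mul tr_diag_mx -/D Hsym mulmxA -(mulmxA H D D) DD mulmx1 HH.
- rewrite det_mulmx det_diag (bigD1 i1) //= big1 ?mulr1; first by rewrite mxE eqxx.
  by move=> k /negbTE hk; rewrite mxE hk.
- rewrite trmx_mul tr_diag_mx -/D Hsym mulmxA.
  have -> : e1 R d *m D = e1 R d.
    rewrite /D mul_mx_diag; apply/matrixP => i j; rewrite !mxE.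
    case: (eqVneq j i1) => [->|hj]; first by rewrite /= mul0r.
    by rewrite mulr1.
  exact: e1H.
Qed.
Lemma term_le_sum (F : 'I_d -> R) : (forall k, 0 <= F k) -> forall j, F j <= \sum_k F k.
Proof.
move=> F0 j; rewrite (bigD1 j) //= lerDl; exact: sumr_ge0.
Qed.

Lemma sqm_ge0 (x : R) : 0 <= x * x.
Proof. by rewrite -expr2 sqr_ge0. Qed.

Lemma sq_le1 (x : R) : x * x <= 1 -> `|x| <= 1.
Proof. by move=> h; rewrite ler_norml; apply/andP; split; nra. Qed.

Lemma sum_bound (F : 'I_d -> R) B : (forall k, `|F k| <= B) -> `|\sum_k F k| <= d%:R * B.
Proof.
move=> hF; apply: (le_trans (ler_norm_sum _ _ _)).
apply: (@le_trans _ _ (\sum_(k < d) B)); first by apply: ler_sum => k _; exact: hF.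
by rewrite sumr_const card_ord mulr_natl.
Qed.

Lemma dotZ (k : R) u : dot (k *: u) (k *: u) = k ^+ 2 * dot u u.
Proof. by rewrite /dot mulr_sumr; apply: eq_bigr => j _; rewrite !mxE; ring. Qed.

Lemma dotBZ u w z (k : R) : dot (u - k *: w) z = dot u z - k * dot w z.
Proof. by rewrite /dot mulr_sumr -sumrB; apply: eq_bigr => j _; rewrite !mxE; ring. Qed.

Lemma line_rep (d2 : (1 < d)%N) (dpos : (0 < d)%N) (l : L) (a : V) (Y0 : R) :
  sval l a -> (forall k, `|a ord0 k| <= Y0) ->
  exists2 p, Cy (d%:R * (Y0 + d%:R * Y0)) p & Gm dpos p = l.
Proof.
move=> la aY.
have [a0 [v0 [v0n0 hl]]] := svalP l.
move: la; rewrite hl => -[t0 _ ha].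
have dv0 := dot_gt0 v0n0.
set c := Num.sqrt (dot v0 v0).
have c0 : 0 < c by rewrite sqrtr_gt0.
have c2 : c ^+ 2 = dot v0 v0 by rewrite sqr_sqrtr // ltW.
set v := c^-1 *: v0.
have hv : dot v v = 1 by rewrite /v dotZ -c2 exprVn mulVf // expf_neq0 // gt_eqF.
have [th [[thth detth] e1th]] := @householder d2 v hv.
set al := dot a v; set a1 := a - al *: v.
have a1v : dot a1 v = 0 by rewrite /a1 dotBZ hv mulr1 /al subrr.
set x := a1 *m th.
have xth : x *m th^T = a1 by rewrite /x -mulmxA thth mulmx1.
have the1 : th *m (e1 R d)^T = v^T by rewrite -e1th trmx_mul trmxK.
have vb : forall k, `|v ord0 k| <= 1.
  move=> k; apply: sq_le1; rewrite -hv.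
  have := term_le_sum (fun k => v ord0 k * v ord0 k) (fun k => sqm_ge0 _) k.
  by [].
have thb : forall i j, `|th i j| <= 1.
  move=> i j; apply: sq_le1.
  have hii : (th *m th^T) i i = 1 by rewrite thth mxE eqxx.
  rewrite -hii mxE.
  have := term_le_sum (fun k => th i k * th i k) (fun k => sqm_ge0 _) j.
  by congr (_ <= _); apply: eq_bigr => k _; rewrite mxE.
have alb : `|al| <= d%:R * Y0.
  apply: sum_bound => k; rewrite normrM.
  have h1 := aY k; have h2 := vb k; have h3 : 0 <= `|a ord0 k| by [].
  have h4 : 0 <= `|v ord0 k| by []. nra.
have a1b : forall k, `|a1 ord0 k| <= Y0 + d%:R * Y0.
  move=> k; have -> : a1 ord0 k = a ord0 k - al * v ord0 k by rewrite !mxE.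
  apply: (le_trans (ler_normB _ _)); apply: lerD => //.
  rewrite normrM; have h2 := vb k; have h3 : 0 <= `|al| by [].
  have h4 : 0 <= `|v ord0 k| by []. nra.
exists (x, th).
  split; [split|split].
  - move=> j; rewrite /x mxE; apply: sum_bound => k; rewrite normrM.
    have h1 := a1b k; have h2 := thb k j; have h3 : 0 <= `|a1 ord0 k| by [].
    have h4 : 0 <= `|th k j| by []. nra.
  - exact: thb.
  - rewrite /e1perp /= /x -mulmxA the1 row_mul_tr a1v.
    by apply/matrixP => i j; rewrite !mxE mul0rn.
  - by [].
apply: line_sval_inj; rewrite Gm_sval //= hl.
have cn0 : c != 0 by rewrite gt_eqF.
apply/seteqP; split => y [t _ <-].
  exists (t0 + (t - al) / c) => //.
  rewrite /= mulmxDl xth -scalemxAl e1th /a1 /v -ha.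
  by apply/rowP => k; rewrite !mxE; field.
exists (al + (t - t0) * c) => //.
rewrite /= mulmxDl xth -scalemxAl e1th /a1 /v -ha.
by apply/rowP => k; rewrite !mxE; field.
Qed.
Lemma lf_finite (w : set L -> \bar R) (I : set nat) (f : nat -> L) :
  (forall A : set L, w A = (\esum_(i in I) (\1_A (f i) : R)%:E)%E) ->
  forall K, (w K < +oo)%E -> finite_set [set i | I i /\ K (f i)].
Proof. by move=> hw K; rewrite hw; exact: LF.lf_finite_gen. Qed.

Lemma vacant_open' (d2 : (1 < d)%N) (w : set L -> \bar R) : Omega w -> open (vacant w).
Proof.
have dpos : (0 < d)%N by apply: ltn_trans d2.
move=> [[I [f hw]] lf]; rewrite openE => y Vy.
set Y0 := \sum_k `|y ord0 k| + 2.
set K := Gm dpos @` Cy (d%:R * (Y0 + d%:R * Y0)).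
have cK : compact K.
  apply: continuous_compact; last exact: Cy_compact.
  by apply: continuous_subspaceW (Gm_cont dpos) => p [].
have fin := @lf_finite w I f hw K (lf K cK).
have hD : nbhs y (\bigcap_(i in [set i | I i /\ K (f i)]) ~` cyl (f i)).
  apply: LF.filter_bigI_fin => // i -[Ii Kfi].
  apply: open_nbhs_nbhs; split; first exact: cyl_open_compl.
  move=> cy; apply: Vy; exists (f i) => //; apply/(@supp_char w I f hw); by exists i.
have hB : nbhs y (ball y 1) by apply: nbhsx_ballx.
apply: filterS (filterI hD hB) => z [hz bz] [l sl clz].
have [i Ii fil] := (@supp_char w I f hw l).1 sl.
case: (clz) => x lx hx.
have hxb : forall k, `|x ord0 k| <= Y0.
  move=> k; have h1 : `|z ord0 k - x ord0 k| <= 1.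
    apply: sq_le1; move/enorm_le1: hx => hx.
    have := term_le_sum (fun k => (z - x) ord0 k * (z - x) ord0 k) (fun k => sqm_ge0 _) k.
    by rewrite !mxE => /le_trans; apply.
  have h2 : `|y ord0 k - z ord0 k| < 1 by have := (@ballE y z 1 ltr01).1 bz ord0 k.
  have h3 : `|y ord0 k| <= \sum_k `|y ord0 k|.
    exact: (term_le_sum (fun k => `|y ord0 k|) (fun k => normr_ge0 _) k).
  have -> : x ord0 k = - (z ord0 k - x ord0 k) - (y ord0 k - z ord0 k) + y ord0 k by ring.
  apply: (le_trans (ler_normD _ _)); rewrite /Y0.
  have := ler_normB (- (z ord0 k - x ord0 k)) (y ord0 k - z ord0 k).
  rewrite normrN; lra.
have [p Cp Gp] := @line_rep d2 dpos l x Y0 lx hxb.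
apply: (hz i) => //.
split => //; rewrite fil; exists p => //.
by rewrite fil.
Qed.

Lemma main_meas (d3 : (3 <= d)%N) (A B : set V) : calA (vconnect A B).
Proof.
have dpos : (0 < d)%N by apply: leq_trans d3.
have d2 : (1 < d)%N by apply: leq_trans d3.
pose F := fun n => match (unpickle n : option (idx * seq idx)) with
  | Some (s, r) => [set w | okchain A B s r /\ Omega w /\ w (Uc (s :: r)) = 0%E]
  | None => set0 end.
rewrite (_ : vconnect A B = \bigcup_n F n).
  apply: sigma_algebra_bigcup => n; rewrite /F.
  case: unpickle => [[s r]|]; last exact: sigma_algebra0.
  have [ok|nok] := pselect (okchain A B s r).
    apply: sub_sigma_algebra; exists (Uc (s :: r)), [set 0%E]; split.
    - apply: sub_sigma_algebra; apply: bigcup_open => t _.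
      by apply: HS_open' => //; exact: ball_open.
    - exact: emeasurable_set1.
    - by apply/seteqP; split => w /=; [case=> _ []|case=> ? ?].
  rewrite (_ : [set w | _] = set0); first exact: sigma_algebra0.
  by apply/seteqP; split => w //= [].
apply/seteqP; split.
  move=> w [Ow [p [cp pV Ap Bp]]].
  have [s [r [ok inV]]] := @path_chain' (vacant w) A B p (@vacant_open' d2 w Ow) cp pV Ap Bp.
  exists (pickle (s, r)) => //; rewrite /F pickleK; split => //; split => //.
  exact/Uc0_inV.
move=> w [n _]; rewrite /F; case: unpickle => [[s r]|] //=.
case=> -[[a [Aa fa]] lk [b [Bb fb']]] [Ow hw].
split => //; have inV := (@Uc0_inV w (s :: r) Ow).1 hw.
have [p [cp pV p0 p1]] := @linked_gpath (vacant w) r s lk inV a b fa fb'.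
exists p; split; first exact: continuous_subspaceT.
- by move=> t; rewrite in_itv /= => /andP [h1 h2]; apply: pV; rewrite h1 h2.
- by rewrite p0.
- by rewrite p1.
Qed.

End Main.

Theorem lemma2p3 (R : realType) (d : nat) (u : R) :
  (3 <= d)%N -> 0 < u ->
  forall A B : set 'rV[R]_d, calA (vconnect A B).
Proof. by move=> d3 _ A B; exact: main_meas. Qed.
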